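(* Let $0<s\le1$ and let $\beta\in(1,2)$ be such that the $\beta$-expansion of $1$ terminates; fix $m\in\mathbb N$, $\bar p\in[0,1]^{2^m}$ and $\epsilon>0$. Suppose there are a strictly increasing sequence $(M_k)$ of natural numbers and $0\le c<1$ such that $N^s_\infty\big([0,1)\cap G^{\beta,m}_{\bar p}(M_k,\epsilon)\big)<c$ for all $k$. Then for each cylinder $C$ of $f_\beta$ which is a scaling of $[0,1)$ (i.e. if $C$ has generation $n$ then $f_\beta^n$ maps $C$ onto $[0,1)$, so that $C$ is an affine copy of $[0,1)$ of length $\beta^{-n}$), there is $K_C$ such that $N^s_\infty\big(C\cap G^{\beta,m}_{\bar p}(M_k,\epsilon/2)\big)<c|C|^s$ for all $k>K_C$.
   Context: For $\beta\in(1,2)$ let $f_\beta(x)=\beta x \bmod 1$ on $[0,1)$ and $d_n(x,\beta)=\lfloor \beta f_\beta^n(x)\rfloor$, $n\ge0$; $(x_n)_{n\ge0}=(d_n(x,\beta))_{n\ge0}\in\{0,1\}^{\mathbb N}$ is the $\beta$-expansion of $x$. The expansion of $1$ terminates if $d(1,\beta)=j_0\dots j_{k-1}0^\infty$. A cylinder of generation $n$ is a nonempty set $[i_0\cdots i_{n-1}]=\{x\in[0,1): d_k(x,\beta)=i_k,\ 0\le k<n\}$. For a word $w$ of length $m$ and $n>m$, $\tau^\beta_w(x,n)=\#\{i\in\{0,\dots,n-m-1\}: x_i\dots x_{i+m-1}=w\}$; enumerating binary words of length $m$ as $w_1,\dots,w_{2^m}$, $G^{\beta,m}_{\bar p}(n,\epsilon)=\{x\in[0,1):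 p_{w_j}-\epsilon<\tau^\beta_{w_j}(x,n)/(n-m)<p_{w_j}+\epsilon,\ j=1,\dots,2^m\}$. $N^s_\infty(F)=\inf\{\sum_i|C_i|^s: F\subset\bigcup_iC_i\}$, the infimum over countable covers by cylinders of $f_\beta$. *)

(* Defs.v *)
From Stdlib Require Import Reals Lra Lia ZArith List Classical ClassicalEpsilon.
Open Scope R_scope.

(* floor: Int_part x satisfies IZR (Int_part x) <= x < IZR (Int_part x) + 1 *)

Definition fbeta (beta x : R) : R := beta * x - IZR (Int_part (beta * x)).

Definition fbeta_iter (beta : R) (n : nat) (x : R) : R := Nat.iter n (fbeta beta) x.

Definition digit (beta : R) (n : nat) (x : R) : Z :=
  Int_part (beta * fbeta_iter beta n x).

Definition expansion_of_one_terminates (beta : R) : Prop :=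
  exists k : nat, forall n : nat, (k <= n)%nat -> digit beta n 1 = 0%Z.

Definition binary_word (w : list Z) : Prop := Forall (fun a => a = 0%Z \/ a = 1%Z) w.

(* [i_0 ... i_{n-1}] as a set (it is a cylinder when nonempty) *)
Definition cyl (beta : R) (w : list Z) (x : R) : Prop :=
  0 <= x < 1 /\ forall k : nat, (k < length w)%nat -> digit beta k x = nth k w 0%Z.

Definition is_cylinder_word (beta : R) (w : list Z) : Prop := exists x, cyl beta w x.

(* supremum / infimum of a set of reals (classical choice; junk if not existing) *)
Definition Rsup (E : R -> Prop) : R :=
  epsilon (inhabits 0) (fun m => is_lub E m).

Definition Rinf (E : R -> Prop) : R :=
  epsilon (inhabits 0)
    (fun m => (forall x, E x -> m <= x) /\ (forall b, (forall x, E x -> b <= x) -> b <= m)).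

Definition diam (S : R -> Prop) : R :=
  Rsup (fun d => exists x y, S x /\ S y /\ d = Rabs (x - y)).

(* A countable cover by cylinders: a sequence of (optional, to allow finite
   covers) cylinder words. *)
Definition cyl_cover (beta : R) (C : nat -> option (list Z)) (F : R -> Prop) : Prop :=
  (forall i w, C i = Some w -> is_cylinder_word beta w) /\
  (forall x, F x -> exists i w, C i = Some w /\ cyl beta w x).

Definition cover_term (beta s : R) (C : nat -> option (list Z)) (i : nat) : R :=
  match C i with
  | None => 0
  | Some w => Rpower (diam (cyl beta w)) s
  end.

(* N^s_infty(F) = inf { sum_i |C_i|^s : F subset U_i C_i, C_i cylinders }
   (covers with divergent sum contribute +infty, hence are irrelevant to the inf) *)
Definition Ns_infty (beta s : R) (F : R -> Prop) : R :=
  Rinf (fun v => exists C : nat -> option (list Z),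
           cyl_cover beta C F /\ infinite_sum (cover_term beta s C) v).

Definition word_at (beta : R) (x : R) (i m : nat) : list Z :=
  map (fun j => digit beta (i + j) x) (seq 0 m).

Definition tau (beta : R) (w : list Z) (x : R) (n : nat) : nat :=
  length (filter (fun i => if list_eq_dec Z.eq_dec (word_at beta x i (length w)) w
                           then true else false)
                 (seq 0 (n - length w))).

(* G^{beta,m}_pbar(n,eps); pbar is given as a function on words (only its values
   on the 2^m binary words of length m matter) *)
Definition G (beta : R) (m : nat) (p : list Z -> R) (n : nat) (eps : R) (x : R) : Prop :=
  0 <= x < 1 /\
  forall w : list Z, binary_word w -> length w = m ->
    p w - eps < INR (tau beta w x n) / INR (n - m) < p w + eps.

(* Main.v *)
Require Import Defs.
From Stdlib Require Import Reals Lra Lia ZArith List Classical ClassicalEpsilon.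
Open Scope R_scope.

Lemma fbeta_range beta r : 0 <= fbeta beta r < 1.
Proof. unfold fbeta. destruct (base_Int_part (beta * r)). lra. Qed.

Lemma iter_S beta k x :
  fbeta_iter beta (S k) x = beta * fbeta_iter beta k x - IZR (digit beta k x).
Proof. reflexivity. Qed.

Lemma iter_add beta j n x :
  fbeta_iter beta (j + n) x = fbeta_iter beta j (fbeta_iter beta n x).
Proof. induction j; simpl; [reflexivity|]. unfold fbeta_iter in *. simpl. now rewrite IHj. Qed.

Lemma digit_shift beta n j x :
  digit beta (n + j) x = digit beta j (fbeta_iter beta n x).
Proof. unfold digit. rewrite Nat.add_comm, iter_add. reflexivity. Qed.

Lemma iter_range beta n x : 0 <= x < 1 -> 0 <= fbeta_iter beta n x < 1.
Proof. destruct n; intros H; [exact H|]. apply fbeta_range. Qed.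

Lemma iter_diff beta n x1 x2 :
  (forall k, (k < n)%nat -> digit beta k x1 = digit beta k x2) ->
  fbeta_iter beta n x1 - fbeta_iter beta n x2 = beta ^ n * (x1 - x2).
Proof.
  induction n; intros H.
  - simpl. unfold fbeta_iter. simpl. ring.
  - rewrite !iter_S. rewrite (H n) by lia. rewrite <- tech_pow_Rmult.
    replace (beta * fbeta_iter beta n x1 - IZR (digit beta n x2) -
      (beta * fbeta_iter beta n x2 - IZR (digit beta n x2))) with
      (beta * (fbeta_iter beta n x1 - fbeta_iter beta n x2)) by ring.
    rewrite IHn by (intros; apply H; lia). ring.
Qed.

Lemma cyl_app beta w u x :
  cyl beta (w ++ u) x <-> cyl beta w x /\ cyl beta u (fbeta_iter beta (length w) x).
Proof.
  split.
  - intros [Hx Hd]. split; split; auto.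
    + intros k Hk. rewrite Hd by (rewrite length_app; lia). apply app_nth1; lia.
    + apply iter_range; auto.
    + intros k Hk. rewrite <- digit_shift. rewrite Hd by (rewrite length_app; lia).
      rewrite app_nth2 by lia. f_equal. lia.
  - intros [[Hx Hd1] [_ Hd2]]. split; auto. intros k Hk. rewrite length_app in Hk.
    destruct (Nat.lt_ge_cases k (length w)).
    + rewrite app_nth1 by lia. auto.
    + rewrite app_nth2 by lia. replace k with (length w + (k - length w))%nat at 1 by lia.
      rewrite digit_shift. apply Hd2. lia.
Qed.

Definition DS (S : R -> Prop) (d : R) : Prop := exists x y, S x /\ S y /\ d = Rabs (x - y).

Lemma diam_lub S : (exists x, S x) -> (forall x, S x -> 0 <= x < 1) -> is_lub (DS S) (diam S).
Proof.
  intros [x0 Hx0] HS. unfold diam, Rsup. apply epsilon_spec.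
  destruct (completeness (fun d => exists x y, S x /\ S y /\ d = Rabs (x - y))) as [l Hl].
  - exists 1. intros d (x & y & Hx & Hy & ->). apply HS in Hx. apply HS in Hy.
    unfold Rabs; destruct Rcase_abs; lra.
  - exists 0, x0, x0. repeat split; auto. rewrite Rminus_diag, Rabs_R0. reflexivity.
  - exists l. exact Hl.
Qed.

Lemma Rinf_spec (E : R -> Prop) : (exists v, E v) -> (forall v, E v -> 0 <= v) ->
  (forall x, E x -> Rinf E <= x) /\ (forall b, (forall x, E x -> b <= x) -> b <= Rinf E).
Proof.
  intros [v0 Hv0] Hpos. unfold Rinf. apply epsilon_spec.
  destruct (completeness (fun y => E (- y))) as [l [Hl1 Hl2]].
  - exists 0. intros y Hy. apply Hpos in Hy. lra.
  - exists (- v0). rewrite Ropp_involutive. exact Hv0.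
  - exists (- l). split.
    + intros x Hx. assert (- x <= l). { apply Hl1. rewrite Ropp_involutive. exact Hx. } lra.
    + intros b Hb. assert (l <= - b). { apply Hl2. intros y Hy. apply Hb in Hy. lra. } lra.
Qed.

Lemma cover_term_nonneg beta s C i : 0 <= cover_term beta s C i.
Proof. unfold cover_term. destruct (C i); [unfold Rpower; left; apply exp_pos | lra]. Qed.

Lemma sum_nonneg f n : (forall i, 0 <= f i) -> 0 <= sum_f_R0 f n.
Proof. intros H. induction n; simpl; [apply H|]. specialize (H (S n)). lra. Qed.

Lemma sum_ge_term f n : (forall i, 0 <= f i) -> f n <= sum_f_R0 f n.
Proof. intros H. destruct n; simpl; [lra|]. pose proof (sum_nonneg f n H). lra. Qed.

Lemma term_le_lim f v i : (forall i, 0 <= f i) -> infinite_sum f v -> f i <= v.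
Proof. intros H Hv. eapply Rle_trans; [apply sum_ge_term; auto|]. apply sum_incr; auto. Qed.

Lemma lim_nonneg f v : (forall i, 0 <= f i) -> infinite_sum f v -> 0 <= v.
Proof. intros H Hv. eapply Rle_trans; [apply (H 0%nat)|]. apply term_le_lim; auto. Qed.

Lemma cover_nonempty beta s (F : R -> Prop) : (forall x, F x -> 0 <= x < 1) ->
  exists v, exists C, cyl_cover beta C F /\ infinite_sum (cover_term beta s C) v.
Proof.
  intros HF. set (C0 := fun i : nat => match i with O => Some (@nil Z) | _ => None end).
  exists (cover_term beta s C0 0), C0. split.
  - split.
    + intros i w Hi. destruct i; simpl in Hi; [|discriminate]. inversion Hi; subst.
      exists 0. split; [lra|]. simpl. intros; lia.
    + intros x Hx. exists 0%nat, nil. split; [reflexivity|]. split; [auto|]. simpl; intros; lia.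
  - assert (Hs : forall N, sum_f_R0 (cover_term beta s C0) N = cover_term beta s C0 0).
    { induction N; simpl; [reflexivity|]. rewrite IHN. replace (cover_term beta s C0 (S N)) with 0 by reflexivity. ring. }
    intros e He. exists 0%nat. intros N _. rewrite Hs. unfold Rdist. rewrite Rminus_diag, Rabs_R0. lra.
Qed.

Lemma Rpower_0 s : Rpower 0 s = 1.
Proof. unfold Rpower. replace (ln 0) with 0. rewrite Rmult_0_r. apply exp_0.
unfold ln. destruct (Rlt_dec 0 0) as [r|r]; [exfalso; exact (Rlt_irrefl 0 r)|reflexivity]. Qed.

Lemma cnt_shift (f : nat -> bool) n a L :
  length (filter (fun i => f (n + i)%nat) (seq a L)) = length (filter f (seq (n + a) L)).
Proof.
  revert a. induction L; intros a; simpl; [reflexivity|].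
  destruct (f (n + a)%nat); simpl; rewrite IHL;
  replace (n + S a)%nat with (S (n + a)) by lia; reflexivity.
Qed.

Lemma cnt_diff (f : nat -> bool) n L :
  (length (filter f (seq n L)) <= length (filter f (seq 0 L)) + n /\
   length (filter f (seq 0 L)) <= length (filter f (seq n L)) + n)%nat.
Proof.
  pose proof (seq_app n L 0) as E1. pose proof (seq_app L n 0) as E2.
  rewrite Nat.add_comm in E2. rewrite E2 in E1. simpl in E1.
  assert (Hc := f_equal (fun l => length (filter f l)) E1). simpl in Hc.
  rewrite !filter_app, !length_app in Hc.
  pose proof (filter_length_le f (seq 0 n)). pose proof (filter_length_le f (seq L n)).
  rewrite length_seq in *. lia.
Qed.

Lemma word_at_shift beta n x i len :
  word_at beta (fbeta_iter beta n x) i len = word_at beta x (n + i) len.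
Proof.
  unfold word_at. apply map_ext. intros j. rewrite <- digit_shift. f_equal. lia.
Qed.

Lemma tau_shift beta n x w N :
  let T1 := tau beta w (fbeta_iter beta n x) N in
  let T2 := tau beta w x N in
  (T1 <= T2 + n /\ T2 <= T1 + n)%nat.
Proof.
  intros T1 T2. subst T1 T2. unfold tau.
  set (f := fun i => if list_eq_dec Z.eq_dec (word_at beta x i (length w)) w then true else false).
  assert (E : filter (fun i => if list_eq_dec Z.eq_dec (word_at beta (fbeta_iter beta n x) i (length w)) w
                               then true else false) (seq 0 (N - length w))
            = filter (fun i => f (n + i)%nat) (seq 0 (N - length w))).
  { apply filter_ext. intros i. unfold f. rewrite word_at_shift. reflexivity. }
  rewrite E, cnt_shift, Nat.add_0_r. apply cnt_diff.
Qed.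

Lemma M_ge (M : nat -> nat) : (forall k, (M k < M (S k))%nat) -> forall k, (k <= M k)%nat.
Proof. intros H k. induction k; [lia|]. specialize (H k). lia. Qed.

Lemma freq_close (p e tx ty L n : R) :
  0 < L -> n < e / 2 * L -> ty - tx <= n -> tx - ty <= n ->
  p - e / 2 < tx / L < p + e / 2 -> p - e < ty / L < p + e.
Proof.
  intros HL Hn H1 H2 [H3 H4].
  assert (Hq : n / L < e / 2).
  { apply (Rmult_lt_reg_r L); auto. unfold Rdiv at 1. rewrite Rmult_assoc, Rinv_l by lra. lra. }
  assert (ty / L - tx / L <= n / L).
  { unfold Rdiv. rewrite <- Rmult_minus_distr_r. apply Rmult_le_compat_r; [left; apply Rinv_0_lt_compat; auto| lra]. }
  assert (tx / L - ty / L <= n / L).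
  { unfold Rdiv. rewrite <- Rmult_minus_distr_r. apply Rmult_le_compat_r; [left; apply Rinv_0_lt_compat; auto| lra]. }
  lra.
Qed.

Lemma sum_scal ap f N : sum_f_R0 (fun i => ap * f i) N = ap * sum_f_R0 f N.
Proof. induction N; simpl; [ring|rewrite IHN; ring]. Qed.

Theorem mainTheorem14
  (s beta : R) (m : nat) (p : list Z -> R) (eps : R) (M : nat -> nat) (c : R)
  (Hs : 0 < s <= 1)
  (Hbeta : 1 < beta < 2)
  (Hterm : expansion_of_one_terminates beta)
  (Hp : forall w : list Z, binary_word w -> length w = m -> 0 <= p w <= 1)
  (Heps : 0 < eps)
  (HMinc : forall k : nat, (M k < M (S k))%nat)
  (HMm : forall k : nat, (m < M k)%nat)
  (Hc : 0 <= c < 1)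
  (HN : forall k : nat, Ns_infty beta s (G beta m p (M k) eps) < c) :
  forall w : list Z,
    is_cylinder_word beta w ->
    (forall y, 0 <= y < 1 -> exists x, cyl beta w x /\ fbeta_iter beta (length w) x = y) ->
    exists K : nat, forall k : nat, (K < k)%nat ->
      Ns_infty beta s (fun x => cyl beta w x /\ G beta m p (M k) (eps / 2) x)
        < c * Rpower (diam (cyl beta w)) s.
Proof.
  intros w Hw Hfull.
  assert (Hb0 : 0 < beta) by lra.
  assert (Hbn : 0 < beta ^ length w) by (apply pow_lt; lra).
  set (a := / beta ^ length w).
  assert (Ha : 0 < a) by (apply Rinv_0_lt_compat; auto).
  assert (Haff : forall x1 x2, cyl beta w x1 -> cyl beta w x2 ->
     x1 - x2 = a * (fbeta_iter beta (length w) x1 - fbeta_iter beta (length w) x2)).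
  { intros x1 x2 [_ H1] [_ H2]. rewrite iter_diff. unfold a. field. lra.
    intros k Hk. rewrite H1, H2 by auto. reflexivity. }
  destruct (INR_unbounded (INR m + 2 * INR (length w) / eps)) as [K HK].
  exists K. intros k Hk.
  assert (HMk : (K < M k)%nat) by (pose proof (M_ge M HMinc k); lia).
  assert (HL : INR (M k - m) = INR (M k) - INR m) by (apply minus_INR; pose proof (HMm k); lia).
  assert (HKN : INR K < INR (M k)) by (apply lt_INR; lia).
  assert (HLpos : 0 < INR (M k - m)) by (apply lt_0_INR; pose proof (HMm k); lia).
  assert (Hnl : INR (length w) < eps / 2 * INR (M k - m)).
  { rewrite HL. assert (H : 2 * INR (length w) / eps < INR (M k) - INR m) by lra.
    apply (Rmult_lt_compat_l (eps/2)) in H; [|lra].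
    replace (eps / 2 * (2 * INR (length w) / eps)) with (INR (length w)) in H by (field; lra). exact H. }
  assert (HGmap : forall x, cyl beta w x -> G beta m p (M k) (eps/2) x ->
                    G beta m p (M k) eps (fbeta_iter beta (length w) x)).
  { intros x Hx [Hx01 HGx]. split; [apply iter_range; auto|].
    intros w' Hw' Hlen. specialize (HGx w' Hw' Hlen).
    destruct (tau_shift beta (length w) x w' (M k)) as [T1 T2].
    apply le_INR in T1; apply le_INR in T2; rewrite plus_INR in T1, T2.
    apply (freq_close (p w') eps (INR (tau beta w' x (M k))) _ (INR (M k - m)) (INR (length w)));
      auto; lra. }
  assert (HGk01 : forall x, G beta m p (M k) eps x -> 0 <= x < 1) by (intros x [H _]; exact H).
  set (EG := fun v => exists C, cyl_cover beta C (G beta m p (M k) eps) /\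
                                infinite_sum (cover_term beta s C) v).
  assert (HEGpos : forall v, EG v -> 0 <= v).
  { intros v [C [_ HC]]. eapply lim_nonneg; [apply cover_term_nonneg | exact HC]. }
  destruct (Rinf_spec EG (cover_nonempty beta s _ HGk01) HEGpos) as [_ Hglb].
  assert (Hex : exists v, EG v /\ v < c).
  { apply NNPP. intros Hno. assert (c <= Rinf EG).
    { apply Hglb. intros x Hx. apply Rnot_lt_le. intros Hlt. apply Hno. eauto. }
    specialize (HN k). change (Rinf EG < c) in HN. lra. }
  destruct Hex as [v [[D [[HDcyl HDcov] HDsum]] Hvc]].
  set (D' := fun i => match D i with Some u => Some (w ++ u) | None => None end).
  set (ap := Rpower a s).
  assert (Hap : 0 < ap) by (unfold ap, Rpower; apply exp_pos).
  assert (Hterm' : forall i, cover_term beta s D' i <= ap * cover_term beta s D i).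
  { intros i. unfold cover_term, D'. destruct (D i) as [u|] eqn:Hi; [|lra].
    pose proof (HDcyl i u Hi) as [y0 Hy0].
    assert (Hu01 : forall y, cyl beta u y -> 0 <= y < 1) by (intros y [H _]; exact H).
    destruct (diam_lub _ (ex_intro _ y0 Hy0) Hu01) as [Hub Hleast].
    assert (Htv : Rpower (diam (cyl beta u)) s <= v).
    { pose proof (term_le_lim _ v i (cover_term_nonneg beta s D) HDsum) as T.
      unfold cover_term in T. rewrite Hi in T. exact T. }
    assert (Hd0 : 0 <= diam (cyl beta u)).
    { apply Hub. exists y0, y0. split; [exact Hy0|split; [exact Hy0|]]. rewrite Rminus_diag, Rabs_R0; reflexivity. }
    assert (Hdpos : 0 < diam (cyl beta u)).
    { destruct Hd0 as [|H0]; auto. rewrite <- H0, Rpower_0 in Htv. lra. }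
    assert (Htwo : exists y1 y2, cyl beta u y1 /\ cyl beta u y2 /\ 0 < Rabs (y1 - y2)).
    { apply NNPP. intros Hno. assert (diam (cyl beta u) <= 0).
      { apply Hleast. intros d (y1 & y2 & H1 & H2 & ->). apply Rnot_lt_le. intros Hlt.
        apply Hno. eauto. }
      lra. }
    destruct Htwo as (y1 & y2 & Hy1 & Hy2 & Hy12).
    destruct (Hfull y1 (Hu01 _ Hy1)) as [x1 [Hx1 Ex1]].
    destruct (Hfull y2 (Hu01 _ Hy2)) as [x2 [Hx2 Ex2]].
    assert (Hcx1 : cyl beta (w ++ u) x1) by (apply cyl_app; split; auto; rewrite Ex1; auto).
    assert (Hcx2 : cyl beta (w ++ u) x2) by (apply cyl_app; split; auto; rewrite Ex2; auto).
    assert (HS'01 : forall x, cyl beta (w++u) x -> 0 <= x < 1) by (intros x [H _]; exact H).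
    destruct (diam_lub _ (ex_intro _ x1 Hcx1) HS'01) as [Hub' Hleast'].
    assert (Hd'pos : 0 < diam (cyl beta (w ++ u))).
    { apply Rlt_le_trans with (Rabs (x1 - x2)).
      - rewrite (Haff x1 x2 Hx1 Hx2), Ex1, Ex2, Rabs_mult, (Rabs_pos_eq a) by lra.
        apply Rmult_lt_0_compat; auto.
      - apply Hub'. exists x1, x2. auto. }
    assert (Hd'le : diam (cyl beta (w ++ u)) <= a * diam (cyl beta u)).
    { apply Hleast'. intros d (z1 & z2 & Hz1 & Hz2 & ->).
      apply cyl_app in Hz1 as [Hz1 Hz1']. apply cyl_app in Hz2 as [Hz2 Hz2'].
      rewrite (Haff z1 z2 Hz1 Hz2), Rabs_mult, (Rabs_pos_eq a) by lra.
      apply Rmult_le_compat_l; [lra|]. apply Hub.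
      exists (fbeta_iter beta (length w) z1), (fbeta_iter beta (length w) z2). auto. }
    unfold ap. rewrite Rpower_mult_distr by auto.
    apply Rle_Rpower_l; [lra | split; auto]. }
  assert (Hpart : forall N0, sum_f_R0 (cover_term beta s D') N0 <= ap * v).
  { intros N0. apply Rle_trans with (sum_f_R0 (fun i => ap * cover_term beta s D i) N0).
    - apply sum_Rle. intros; apply Hterm'.
    - rewrite sum_scal. apply Rmult_le_compat_l; [lra|].
      apply sum_incr; [exact HDsum | apply cover_term_nonneg]. }
  destruct (growing_cv (sum_f_R0 (cover_term beta s D'))) as [u Hu].
  { intros N0. simpl. pose proof (cover_term_nonneg beta s D' (S N0)). lra. }
  { exists (ap * v). intros x [N0 ->]. apply Hpart. }
  assert (Huv : u <= ap * v).
  { apply (Rle_cv_lim (Un := sum_f_R0 (cover_term beta s D')) (Vn := fun _ => ap * v)); auto.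
    intros e He. exists 0%nat. intros; unfold Rdist. rewrite Rminus_diag, Rabs_R0. lra. }
  set (ET := fun v => exists C, cyl_cover beta C (fun x => cyl beta w x /\ G beta m p (M k) (eps / 2) x)
                                /\ infinite_sum (cover_term beta s C) v).
  assert (HET : ET u).
  { exists D'. split; [split|exact Hu].
    - intros i u' Hi. unfold D' in Hi. destruct (D i) as [u0|] eqn:E; [|discriminate].
      inversion Hi; subst u'. destruct (HDcyl i u0 E) as [y Hy].
      destruct (Hfull y (proj1 Hy)) as [x [Hx Ex]]. exists x. apply cyl_app. split; auto.
      rewrite Ex; auto.
    - intros x [Hx HGx]. destruct (HDcov _ (HGmap x Hx HGx)) as [i [u0 [Hi Hc0]]].
      exists i, (w ++ u0). split; [unfold D'; rewrite Hi; reflexivity|]. apply cyl_app. auto. }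
  assert (HETpos : forall v, ET v -> 0 <= v).
  { intros v0 [C [_ HC]]. eapply lim_nonneg; [apply cover_term_nonneg | exact HC]. }
  destruct (Rinf_spec ET (ex_intro _ u HET) HETpos) as [Hlow _].
  specialize (Hlow u HET).
  assert (HdC : a <= diam (cyl beta w)).
  { destruct Hw as [x0 Hx0].
    destruct (diam_lub (cyl beta w) (ex_intro _ x0 Hx0) (fun x H => proj1 H)) as [HubC _].
    assert (HD0 : 0 <= diam (cyl beta w)).
    { apply HubC. exists x0, x0. split; [exact Hx0|split; [exact Hx0|]]. rewrite Rminus_diag, Rabs_R0; reflexivity. }
    apply Rnot_lt_le. intros Hlt.
    set (D0 := diam (cyl beta w)) in *.
    set (eta := (a - D0) / (2 * a)).
    assert (Heta : eta * (2 * a) = a - D0) by (unfold eta; field; lra).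
    assert (Heta1 : 0 < eta) by nra.
    assert (Heta2 : eta <= 1/2) by nra.
    destruct (Hfull 0) as [x1 [Hx1 E1]]; [lra|].
    destruct (Hfull (1 - eta)) as [x2 [Hx2 E2]]; [lra|].
    assert (Hle : Rabs (x2 - x1) <= D0) by (apply HubC; exists x2, x1; auto).
    rewrite (Haff x2 x1 Hx2 Hx1), E1, E2, Rabs_mult, (Rabs_pos_eq a), Rabs_pos_eq in Hle by lra.
    nra. }
  change (Rinf ET < c * Rpower (diam (cyl beta w)) s).
  assert (Hpw : ap <= Rpower (diam (cyl beta w)) s) by (apply Rle_Rpower_l; lra).
  assert (ap * v < ap * c) by (apply Rmult_lt_compat_l; auto).
  assert (ap * c <= c * Rpower (diam (cyl beta w)) s).
  { rewrite Rmult_comm. apply Rmult_le_compat_l; lra. }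
  lra.
Qed.
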